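(* The set of all extreme points $x$ of $B_J$ for which the set of $x$-norming partitions has cardinality greater than $\aleph_0$ is uncountable.
   Context: For a real sequence $x=(x(n))_{n\in\mathbb N}$ let $\|x\|_J=\sup\bigl(\sum_{i=1}^n|\sum_{k\in I_i}x(k)|^2\bigr)^{1/2}$ over all $n$ and all families of pairwise disjoint intervals $I_1,\dots,I_n$ of $\mathbb N$ (intervals: nonempty sets of consecutive positive integers, possibly infinite). $J=\{x:\|x\|_J<\infty\}$ with closed unit ball $B_J$; for $x\in J$ and any interval $I$ the series $\sum_{k\in I}x(k)$ converges. $\mathrm{supp}(x)=\{n:x(n)\ne0\}$. A family of intervals $\mathcal I=\{I_i\}_{i\in F}$: $F=\{1,\dots,k\}$ or $F=\mathbb N$, each $I_i$ an interval, $\max I_i<\min I_{i+1}$ whenever $i+1\in F$; $\|x\|_{\mathcal I}=(\sum_{i\in F}|\sum_{k\in I_i}x(k)|^2)^{1/2}$; it is $x$-norming if $\|x\|_{\mathcal I}=\|x\|_J$. For nonempty $L\subset\mathbb N$, $\sup L=\max L$ if finite and $\infty$ otherwise. An $x$-norming partition is an $x$-norming family with $\{\min I_i,\max I_i\}\subset\mathrm{supp}(x)$ for all $i<\sup F$, and, if $F$ is finite, $\min I_i\in\mathrm{supp}(x)$ and $\sup I_i=\sup\mathrm{supp}(x)$ for $i=\sup F$. *)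

(* Defs.v *)
From Stdlib Require Import Reals List Lia.
From Coquelicot Require Import Coquelicot.
Open Scope R_scope.

(* Real sequences indexed by the positive integers; we index by nat and
   treat index 0 as "1" (an order-isomorphic relabelling of N). *)
Definition rseq := nat -> R.

(* Encoded canonically by its minimum [lo] and its maximum [hi]
   ([hi = None] means the interval is infinite, i.e. [lo, oo)). *)
Record interval := mkInterval { lo : nat ; hi : option nat }.

Definition valid_interval (I : interval) : Prop :=
  match hi I with Some b => (lo I <= b)%nat | None => True end.

Definition in_interval (I : interval) (k : nat) : Prop :=
  (lo I <= k)%nat /\ match hi I with Some b => (k <= b)%nat | None => True end.

Definition isum (x : rseq) (I : interval) : R :=
  match hi I with
  | Some b => sum_n_m x (lo I) b
  | None => Series (fun n => x (lo I + n)%nat)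
  end.

Definition pairwise_disjoint (l : list interval) : Prop :=
  forall i j, (i < length l)%nat -> (j < length l)%nat -> i <> j ->
    forall k, ~ (in_interval (nth i l (mkInterval 0 None)) k /\
                 in_interval (nth j l (mkInterval 0 None)) k).

Definition sumsq (x : rseq) (l : list interval) : R :=
  fold_right Rplus 0 (map (fun I => (isum x I) ^ 2) l).

Definition Jnorm_sq (x : rseq) : Rbar :=
  Lub_Rbar (fun r => exists l : list interval,
              (forall I, In I l -> valid_interval I) /\ pairwise_disjoint l /\ r = sumsq x l).

Definition Rbar_sqrt (r : Rbar) : Rbar :=
  match r with Finite a => Finite (sqrt a) | p_infty => p_infty | m_infty => m_infty end.

Definition Jnorm (x : rseq) : Rbar := Rbar_sqrt (Jnorm_sq x).

Definition BJ (x : rseq) : Prop := Rbar_le (Jnorm x) 1.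

Definition extreme_BJ (x : rseq) : Prop :=
  BJ x /\ forall (y z : rseq) (t : R), BJ y -> BJ z -> 0 < t < 1 ->
    (forall n, x n = t * y n + (1 - t) * z n) -> y = z.

(* A family of intervals {I_i}_{i in F}: F = {1..k} (k >= 1), encoded as a
   nonempty finite list, or F = N, encoded as a stream of intervals. *)
Inductive family :=
  | FinFam (l : list interval)
  | InfFam (f : nat -> interval).

Definition fam_idx (F : family) (i : nat) : Prop :=
  match F with FinFam l => (i < length l)%nat | InfFam _ => True end.

Definition fam_get (F : family) (i : nat) : interval :=
  match F with FinFam l => nth i l (mkInterval 0 None) | InfFam f => f i end.

Definition is_family (F : family) : Prop :=
  (match F with FinFam l => l <> nil | InfFam _ => True end) /\
  (forall i, fam_idx F i -> valid_interval (fam_get F i)) /\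
  (forall i, fam_idx F (S i) ->
     exists b, hi (fam_get F i) = Some b /\ (b < lo (fam_get F (S i)))%nat).

Definition fam_sq (x : rseq) (F : family) : Rbar :=
  match F with
  | FinFam l => Finite (sumsq x l)
  | InfFam f => Lim_seq (fun n => sum_n (fun i => (isum x (f i)) ^ 2) n)
  end.

Definition fam_norm (x : rseq) (F : family) : Rbar := Rbar_sqrt (fam_sq x F).

Definition norming (x : rseq) (F : family) : Prop :=
  is_family F /\ fam_norm x F = Jnorm x.

Definition supp (x : rseq) (n : nat) : Prop := x n <> 0.

Definition is_max_of (A : nat -> Prop) (m : nat) : Prop :=
  A m /\ forall n, A n -> (n <= m)%nat.

(* sup A = sup B for nonempty A, B ⊂ N (sup = max if finite/bounded, oo otherwise) *)
Definition same_sup (A B : nat -> Prop) : Prop :=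
  forall m, is_max_of A m <-> is_max_of B m.

Definition norming_partition (x : rseq) (F : family) : Prop :=
  norming x F /\
  (forall i, fam_idx F (S i) ->
     supp x (lo (fam_get F i)) /\
     exists b, hi (fam_get F i) = Some b /\ supp x b) /\
  (match F with
   | FinFam l => forall i, S i = length l ->
       supp x (lo (fam_get F i)) /\
       same_sup (in_interval (fam_get F i)) (supp x)
   | InfFam _ => True
   end).

Definition countable_set {T : Type} (A : T -> Prop) : Prop :=
  exists g : T -> nat, forall a b, A a -> A b -> g a = g b -> a = b.

(* Main.v *)
Require Import Defs.
From Stdlib Require Import Reals Lra Lia List Classical ClassicalEpsilon FunctionalExtensionality.
From Coquelicot Require Import Coquelicot.
Open Scope R_scope.
Ltac fixR := match goal with |- @eq _ ?a ?b => change (@eq R a b) end.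

Fixpoint P (f : nat -> R) (n : nat) : R :=
  match n with O => 0 | S k => P f k + f k end.

Lemma P_sum_n_m (f : nat -> R) a b : (a <= b)%nat -> sum_n_m f a b = P f (S b) - P f a.
Proof.
  intros H. induction b.
  - assert (a = 0%nat) by lia; subst. rewrite sum_n_n. fixR. simpl; ring.
  - destruct (Nat.eq_dec a (S b)).
    + subst. rewrite sum_n_n. fixR. simpl; ring.
    + rewrite sum_n_Sm by lia. rewrite IHb by lia. change (plus ?u ?v) with (u + v). fixR. simpl. ring.
Qed.

Lemma sum_n_shift (f : nat -> R) a N : sum_n (fun n => f (a+n)%nat) N = P f (a + S N) - P f a.
Proof.
  induction N.
  - rewrite sum_O. fixR. rewrite Nat.add_0_r, Nat.add_1_r. simpl; ring.
  - rewrite sum_Sn, IHN. change (plus ?u ?v) with (u + v). fixR.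
    rewrite (Nat.add_succ_r a (S N)). simpl. ring.
Qed.

Lemma P_ext f g n : (forall k, (k < n)%nat -> f k = g k) -> P f n = P g n.
Proof. induction n; intros H; simpl; auto. rewrite IHn by (intros; apply H; lia). rewrite H by lia. auto. Qed.

Lemma P_le f g n : (forall k, (k < n)%nat -> f k <= g k) -> P f n <= P g n.
Proof. induction n; intros H; simpl. lra. assert (P f n <= P g n) by (apply IHn; intros; apply H; lia).
 assert (f n <= g n) by (apply H; lia). lra. Qed.

Lemma P_mono f n m : (forall k, 0 <= f k) -> (n <= m)%nat -> P f n <= P f m.
Proof. intros Hf H. induction H. lra. simpl. specialize (Hf m). lra. Qed.

Lemma P_nonneg f n : (forall k, 0 <= f k) -> 0 <= P f n.
Proof. intros Hf. apply (P_mono f 0 n Hf). lia. Qed.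

Lemma P_term f n k : (forall k, 0 <= f k) -> (k < n)%nat -> f k <= P f n.
Proof. intros Hf H. apply Nat.le_succ_l in H. eapply Rle_trans; [|apply (P_mono f _ _ Hf H)].
  simpl. pose proof (P_nonneg f k Hf). lra. Qed.

Lemma P_zero n : P (fun _ => 0) n = 0.
Proof. induction n; simpl; auto. rewrite IHn; ring. Qed.

Lemma P_plus f g n : P (fun k => f k + g k) n = P f n + P g n.
Proof. induction n; simpl. ring. rewrite IHn; ring. Qed.

Definition indb (I : interval) (k : nat) : bool :=
  (Nat.leb (lo I) k && match hi I with Some b => Nat.leb k b | None => true end)%bool.
Definition ind (I : interval) (k : nat) : R := if indb I k then 1 else 0.

Lemma indb_spec I k : indb I k = true <-> in_interval I k.
Proof.
  unfold indb, in_interval. destruct I as [a [b|]]; simpl;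
  rewrite ?Bool.andb_true_iff, ?Nat.leb_le; tauto.
Qed.

Definition cnt (l : list interval) (k : nat) : R := fold_right Rplus 0 (map (fun I => ind I k) l).

Lemma exchange (g : nat -> R) l M :
  fold_right Rplus 0 (map (fun I => P (fun k => g k * ind I k) M) l) = P (fun k => g k * cnt l k) M.
Proof.
  induction l as [|I l IH]; simpl.
  - unfold cnt; simpl. rewrite (P_ext _ (fun _ => 0)) by (intros; ring). symmetry; apply P_zero.
  - rewrite IH, <- P_plus. apply P_ext. intros. unfold cnt; simpl. ring.
Qed.

Lemma pd_cons I l : pairwise_disjoint (I :: l) ->
  pairwise_disjoint l /\ (forall J, In J l -> forall k, ~ (in_interval I k /\ in_interval J k)).
Proof.
  intros H. split.
  - intros i j Hi Hj Hij k. apply (H (S i) (S j)); simpl; lia.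
  - intros J HJ k. destruct (In_nth l J (mkInterval 0 None) HJ) as [n [Hn Hnth]].
    specialize (H 0%nat (S n)). simpl in H. rewrite Hnth in H. apply H; lia.
Qed.

Lemma ind_01 I k : 0 <= ind I k <= 1.
Proof. unfold ind; destruct (indb I k); lra. Qed.

Lemma cnt_le1 l : pairwise_disjoint l -> forall k, 0 <= cnt l k <= 1.
Proof.
  induction l as [|I l IH]; intros H k.
  - unfold cnt; simpl. lra.
  - destruct (pd_cons I l H) as [H1 H2]. specialize (IH H1 k).
    change (cnt (I :: l) k) with (ind I k + cnt l k).
    unfold ind. destruct (indb I k) eqn:E.
    + apply indb_spec in E.
      assert (cnt l k = 0).
      { clear IH H H1. unfold cnt. induction l as [|J l IHl]; simpl; auto.
        unfold ind at 1. destruct (indb J k) eqn:E2.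
        - apply indb_spec in E2. exfalso. apply (H2 J (or_introl eq_refl) k); auto.
        - rewrite IHl; try ring. intros; apply H2; simpl; auto. }
      lra.
    + lra.
Qed.

Lemma fold_bound (f g : interval -> R) l : (forall I, In I l -> f I <= g I) ->
  fold_right Rplus 0 (map f l) <= fold_right Rplus 0 (map g l).
Proof.
  induction l; simpl; intros H. lra.
  assert (f a <= g a) by auto. assert (fold_right Rplus 0 (map f l) <= fold_right Rplus 0 (map g l)) by auto. lra.
Qed.

Lemma P_S f n : P f (S n) = P f n + f n.
Proof. reflexivity. Qed.

Lemma P_ind_fin f a b M : (a <= S b)%nat ->
  P (fun k => f k * ind (mkInterval a (Some b)) k) M = P f (Nat.min M (S b)) - P f (Nat.min M a).
Proof.
  intros Hab. induction M. simpl; ring.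
  rewrite P_S, IHM. unfold ind, indb; simpl lo; simpl hi.
  destruct (Nat.leb a M) eqn:E1; destruct (Nat.leb M b) eqn:E2; simpl andb;
  rewrite ?Nat.leb_le in *; rewrite ?Nat.leb_gt in *.
  - replace (Nat.min (S M) (S b)) with (S M) by lia. replace (Nat.min M (S b)) with M by lia.
    replace (Nat.min (S M) a) with a by lia. replace (Nat.min M a) with a by lia. rewrite (P_S f M); ring.
  - replace (Nat.min (S M) (S b)) with (S b) by lia. replace (Nat.min M (S b)) with (S b) by lia.
    replace (Nat.min (S M) a) with a by lia. replace (Nat.min M a) with a by lia. ring.
  - replace (Nat.min (S M) (S b)) with (S M) by lia. replace (Nat.min M (S b)) with M by lia.
    replace (Nat.min (S M) a) with (S M) by lia. replace (Nat.min M a) with M by lia. rewrite (P_S f M); ring.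
  - lia.
Qed.

Lemma P_ind_inf f a M :
  P (fun k => f k * ind (mkInterval a None) k) M = P f M - P f (Nat.min M a).
Proof.
  induction M. simpl; ring.
  rewrite P_S, IHM. unfold ind, indb; simpl lo; simpl hi.
  destruct (Nat.leb a M) eqn:E1; simpl andb;
  rewrite ?Nat.leb_le in *; rewrite ?Nat.leb_gt in *.
  - replace (Nat.min (S M) a) with a by lia. replace (Nat.min M a) with a by lia. rewrite (P_S f M); ring.
  - replace (Nat.min (S M) a) with (S M) by lia. replace (Nat.min M a) with M by lia. rewrite (P_S f M); ring.
Qed.

Definition sl (n : nat) : list interval := map (fun k => mkInterval k (Some k)) (seq 0 n).

Lemma fold_app_R l1 l2 : fold_right Rplus 0 (l1 ++ l2) = fold_right Rplus 0 l1 + fold_right Rplus 0 l2.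
Proof. induction l1; simpl. ring. rewrite IHl1; ring. Qed.

Lemma fold_seq (g : nat -> R) n : fold_right Rplus 0 (map g (seq 0 n)) = P g n.
Proof. induction n. reflexivity. rewrite seq_S, map_app, fold_app_R, IHn. simpl. ring. Qed.

Lemma sumsq_sl y n : sumsq y (sl n) = P (fun k => (y k)^2) n.
Proof.
  unfold sumsq, sl. rewrite map_map. rewrite <- fold_seq. f_equal. apply map_ext.
  intros k. unfold isum; simpl. rewrite sum_n_n. reflexivity.
Qed.

Lemma sl_adm n : (forall I, In I (sl n) -> valid_interval I) /\ pairwise_disjoint (sl n).
Proof.
  split.
  - intros I HI. unfold sl in HI. apply in_map_iff in HI. destruct HI as [k [<- _]]. unfold valid_interval; simpl; lia.
  - intros i j Hi Hj Hij k [H1 H2]. unfold sl in *. rewrite length_map, length_seq in *.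
    rewrite nth_indep with (d' := mkInterval 0%nat (Some 0%nat)) in H1, H2 by (rewrite length_map, length_seq; lia).
    rewrite (map_nth (fun k => mkInterval k (Some k))) in H1, H2.
    rewrite seq_nth in H1, H2 by lia. unfold in_interval in *; simpl in *. lia.
Qed.

Definition Eset (y : rseq) := fun r => exists l : list interval,
  (forall I, In I l -> valid_interval I) /\ pairwise_disjoint l /\ r = sumsq y l.

Lemma BJ_Q y : BJ y -> forall n, P (fun k => (y k)^2) n <= 1.
Proof.
  intros H n. unfold BJ, Jnorm, Jnorm_sq in H.
  destruct (Lub_Rbar_correct (Eset y)) as [Hub _].
  assert (Hin : Eset y (P (fun k => (y k)^2) n)).
  { exists (sl n). destruct (sl_adm n). repeat split; auto. symmetry; apply sumsq_sl. }
  specialize (Hub _ Hin). fold (Eset y) in H.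
  destruct (Lub_Rbar (Eset y)) as [L| |]; simpl in *; try contradiction.
  destruct (Rle_dec L 1). lra.
  assert (1 < sqrt L). { rewrite <- sqrt_1. apply sqrt_lt_1_alt. lra. } lra.
Qed.

Definition tab (b : bool) (r : nat) : R :=
  if b then match r with 0%nat => 2 | 1%nat => -1 | 2%nat => 2 | 3%nat => -2 | 4%nat => 1 | 5%nat => -2 | _ => 0 end
  else match r with 0%nat => 0 | 1%nat => 2 | 2%nat => -1 | 3%nat => 2 | 4%nat => -2 | 5%nat => 1 | 6%nat => -2 | _ => 0 end.

Definition s b r := P (tab b) r.
Definition q b r := P (fun k => (tab b k)^2) r.

Ltac tabc := unfold s, q; cbn [P tab]; lra.

Lemma T1 b r r' : (r <= r' <= 7)%nat -> (s b r' - s b r)^2 <= q b r' - q b r.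
Proof.
  intros H. destruct b;
  (do 8 (destruct r as [|r]; [do 8 (destruct r' as [|r']; [try tabc; try lia|]); lia|])); lia.
Qed.

Lemma T2 b r : (r <= 7)%nat -> 0 <= s b r <= 3 /\ (s b r)^2 <= q b r /\ (s b r)^2 <= 18 - q b r.
Proof.
  intros H. destruct b; (do 8 (destruct r as [|r]; [repeat split; tabc|])); lia.
Qed.

Lemma T3 b : s b 7 = 0 /\ q b 7 = 18.
Proof. destruct b; split; tabc. Qed.

Definition c (j : nat) : R := 2/9 * (1/3)^j.

Lemma c_pos j : 0 < c j.
Proof. unfold c. apply Rmult_lt_0_compat. lra. apply pow_lt; lra. Qed.

Lemma c_S j : c (S j) = c j / 3.
Proof. unfold c; simpl; field. Qed.

Lemma c_le j : c j <= 2/9.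
Proof. induction j. unfold c; simpl; lra. rewrite c_S. pose proof (c_pos j). lra. Qed.

Lemma c_small eps : 0 < eps -> exists J, forall j, (J <= j)%nat -> c j < eps.
Proof.
  intros He. destruct (pow_lt_1_zero (1/3)) with (y := eps) as [J HJ].
  rewrite Rabs_pos_eq; lra. auto.
  exists J. intros j Hj. specialize (HJ j Hj). rewrite Rabs_pos_eq in HJ by (apply pow_le; lra).
  unfold c. assert (0 <= (1/3)^j) by (apply pow_le; lra). lra.
Qed.

Definition x (beta : nat -> bool) (n : nat) : R := c (n / 7)%nat * tab (beta (n / 7)%nat) (n mod 7)%nat.

Lemma dm k m r : (0 < k -> r < k -> (k*m + r)/k = m /\ (k*m+r) mod k = r)%nat.
Proof. intros. split. symmetry; apply (Nat.div_unique _ _ _ r); lia. symmetry; apply (Nat.mod_unique _ _ m); lia. Qed.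

Lemma decomp k n : (0 < k)%nat -> exists j r, (r < k)%nat /\ n = (k*j + r)%nat.
Proof. intros. exists (n/k)%nat, (n mod k)%nat. split. apply Nat.mod_upper_bound; lia. apply Nat.div_mod_eq. Qed.

Lemma x_at beta j r : (r < 7)%nat -> x beta (7*j + r)%nat = c j * tab (beta j) r.
Proof. intros H. unfold x. destruct (dm 7 j r) as [-> ->]; auto; lia. Qed.

Definition Q beta n := P (fun k => (x beta k)^2) n.

Lemma Pblock beta j : forall r, (r <= 7)%nat ->
  P (x beta) (7*j + r)%nat = c j * s (beta j) r /\
  Q beta (7*j + r)%nat = 1 - 81/4 * (c j)^2 + (c j)^2 * q (beta j) r.
Proof.
  induction j.
  - intros r Hr. induction r.
    + simpl. unfold s, q, Q, c; simpl. split; field.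
    + rewrite Nat.add_succ_r. unfold Q. rewrite !P_S. fold (Q beta (7*0 + r)%nat).
      destruct IHr as [H1 H2]. lia. rewrite H1, H2, x_at by lia.
      unfold s, q. rewrite !P_S. fold (s (beta 0%nat) r). fold (q (beta 0%nat) r). split; ring.
  - intros r Hr. induction r.
    + destruct (IHj 7%nat) as [H1 H2]. lia.
      replace (7 * S j + 0)%nat with (7 * j + 7)%nat by lia. rewrite H1, H2.
      destruct (T3 (beta j)) as [-> ->]. destruct (T3 (beta (S j))) as [_ _].
      unfold s, q; simpl P. rewrite c_S. split; field.
    + rewrite Nat.add_succ_r. unfold Q. rewrite !P_S. fold (Q beta (7*S j + r)%nat).
      destruct IHr as [H1 H2]. lia. rewrite H1, H2, x_at by lia.
      unfold s, q. rewrite !P_S. fold (s (beta (S j)) r). fold (q (beta (S j)) r). split; ring.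
Qed.

Lemma Q_mono beta n m : (n <= m)%nat -> Q beta n <= Q beta m.
Proof. intros; unfold Q; apply P_mono; auto. intros; apply pow2_ge_0. Qed.

Lemma key beta a b : (a <= b)%nat ->
  (P (x beta) b - P (x beta) a)^2 <= Q beta b - Q beta a.
Proof.
  intros Hab.
  destruct (decomp 7 a) as [j [r [Hr ->]]]; [lia|].
  destruct (decomp 7 b) as [j' [r' [Hr' ->]]]; [lia|].
  destruct (Pblock beta j r) as [Pa Qa]; [lia|].
  destruct (Pblock beta j' r') as [Pb Qb]; [lia|].
  rewrite Pa, Qa, Pb, Qb.
  assert (j = j' \/ (j < j')%nat) as [<-|Hjj] by nia.
  - assert (r <= r')%nat by nia. pose proof (T1 (beta j) r r') as T. pose proof (c_pos j).
    assert (T' : (c j)^2 * (s (beta j) r' - s (beta j) r)^2 <= (c j)^2 * (q (beta j) r' - q (beta j) r)).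
    { apply Rmult_le_compat_l. nra. apply T; lia. }
    nra.
  - assert (HQ : Q beta (7*j+7) <= Q beta (7*j'+0)) by (apply Q_mono; lia).
    destruct (Pblock beta j 7) as [_ Q1]; [lia|]. destruct (Pblock beta j' 0) as [_ Q2]; [lia|].
    rewrite Q1, Q2 in HQ. destruct (T3 (beta j)) as [_ E7]. rewrite E7 in HQ.
    unfold q in HQ. simpl P in HQ.
    destruct (T2 (beta j) r) as [[s1 s2] [s3 s4]]; [lia|].
    destruct (T2 (beta j') r') as [[s1' s2'] [s3' s4']]; [lia|].
    pose proof (c_pos j). pose proof (c_pos j').
    set (u := s (beta j) r) in *. set (u' := s (beta j') r') in *.
    set (v := q (beta j) r) in *. set (v' := q (beta j') r') in *.
    set (C := c j) in *. set (C' := c j') in *. clearbody u u' v v' C C'.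
    assert (H1 : C'^2 * u'^2 <= C'^2 * v') by (apply Rmult_le_compat_l; nra).
    assert (H2 : C^2 * u^2 <= C^2 * (18 - v)) by (apply Rmult_le_compat_l; nra).
    assert (H3 : 0 <= C * C' * u * u') by (repeat apply Rmult_le_pos; lra).
    nra.
Qed.

Lemma Q_le1 beta n : Q beta n <= 1.
Proof.
  destruct (decomp 7 n) as [j [r [Hr ->]]]; [lia|].
  apply Rle_trans with (Q beta (7*j+7)%nat). apply Q_mono; lia.
  destruct (Pblock beta j 7) as [_ H]; [lia|]. rewrite H. destruct (T3 (beta j)) as [_ ->].
  pose proof (c_pos j). nra.
Qed.

Lemma tail beta a : (P (x beta) a)^2 <= 1 - Q beta a.
Proof.
  destruct (decomp 7 a) as [j [r [Hr Ha]]]; [lia|].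
  pose proof (key beta a (7*j+7)%nat ltac:(lia)) as K.
  destruct (Pblock beta j 7) as [H _]; [lia|]. rewrite H in K. destruct (T3 (beta j)) as [E _]. rewrite E in K.
  pose proof (Q_le1 beta (7*j+7)%nat). nra.
Qed.

Lemma Px_small beta eps : 0 < eps -> exists N, forall n, (N <= n)%nat -> Rabs (P (x beta) n) < eps.
Proof.
  intros He. destruct (c_small (eps/4)) as [J HJ]. lra.
  exists (7*J)%nat. intros n Hn.
  destruct (decomp 7 n) as [j [r [Hr ->]]]; [lia|].
  destruct (Pblock beta j r) as [H _]; [lia|]. rewrite H.
  destruct (T2 (beta j) r) as [[s1 s2] _]; [lia|].
  specialize (HJ j ltac:(lia)). pose proof (c_pos j).
  rewrite Rabs_pos_eq by (apply Rmult_le_pos; lra). nra.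
Qed.

Lemma isum_inf beta a : isum (x beta) (mkInterval a None) = - P (x beta) a.
Proof.
  unfold isum; simpl. unfold Series.
  replace (- P (x beta) a) with (real (Finite (- P (x beta) a))) by reflexivity. f_equal.
  apply is_lim_seq_unique. apply is_lim_seq_spec. intros eps.
  destruct (Px_small beta eps (cond_pos eps)) as [N HN]. exists N. intros n Hn.
  rewrite sum_n_shift. specialize (HN (a + S n)%nat ltac:(lia)).
  replace (P (x beta) (a + S n) - P (x beta) a - - P (x beta) a) with (P (x beta) (a + S n)) by ring. auto.
Qed.

Lemma isum_fin beta a b : (a <= b)%nat -> isum (x beta) (mkInterval a (Some b)) = P (x beta) (S b) - P (x beta) a.
Proof. intros H. unfold isum; simpl. apply P_sum_n_m; auto. Qed.

Definition W beta N k := if Nat.ltb k N then (x beta k)^2 else 1 - Q beta N.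

Lemma W_nonneg beta N k : 0 <= W beta N k.
Proof. unfold W. destruct (Nat.ltb k N). apply pow2_ge_0. pose proof (Q_le1 beta N); lra. Qed.

Lemma PW beta N m : (m <= N)%nat -> P (W beta N) m = Q beta m.
Proof. intros H. unfold Q. apply P_ext. intros k Hk. unfold W. replace (Nat.ltb k N) with true; auto.
  symmetry; apply Nat.ltb_lt; lia. Qed.

Lemma PW1 beta N : P (W beta N) (S N) = 1.
Proof. rewrite P_S, PW by lia. unfold W. rewrite Nat.ltb_irrefl. ring. Qed.

Lemma interval_bound beta N I : valid_interval I -> (lo I <= N)%nat ->
  (match hi I with Some b => (b < N)%nat | None => True end) ->
  (isum (x beta) I)^2 <= P (fun k => W beta N k * ind I k) (S N).
Proof.
  destruct I as [a [b|]]; unfold valid_interval; cbn [lo hi]; intros Hv Ha Hb.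
  - rewrite P_ind_fin by lia. rewrite isum_fin by lia.
    replace (Nat.min (S N) (S b)) with (S b) by lia. replace (Nat.min (S N) a) with a by lia.
    rewrite !PW by lia. apply key; lia.
  - rewrite P_ind_inf, isum_inf. replace (Nat.min (S N) a) with a by lia.
    rewrite PW1, PW by lia. pose proof (tail beta a). nra.
Qed.

Lemma list_N (l : list interval) : exists N, forall I, In I l -> (lo I <= N)%nat /\
  (match hi I with Some b => (b < N)%nat | None => True end).
Proof.
  induction l as [|I l [N HN]]. exists 0%nat; simpl; tauto.
  exists (Nat.max N (Nat.max (lo I) (match hi I with Some b => S b | None => 0 end))).
  intros J [<-|HJ].
  - destruct (hi I); split; lia.
  - destruct (HN J HJ) as [h1 h2]. split. lia. destruct (hi J); lia.
Qed.

Lemma upper beta l : (forall I, In I l -> valid_interval I) -> pairwise_disjoint l -> sumsq (x beta) l <= 1.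
Proof.
  intros Hv Hd. destruct (list_N l) as [N HN].
  unfold sumsq. eapply Rle_trans.
  apply (fold_bound _ (fun I => P (fun k => W beta N k * ind I k) (S N))).
  intros I HI. destruct (HN I HI). apply interval_bound; auto.
  rewrite exchange. rewrite <- (PW1 beta N). apply P_le. intros k _.
  destruct (cnt_le1 l Hd k). pose proof (W_nonneg beta N k). nra.
Qed.

Lemma Jsq beta : Jnorm_sq (x beta) = Finite 1.
Proof.
  unfold Jnorm_sq. apply is_lub_Rbar_unique. split.
  - intros r [l [Hv [Hd ->]]]. simpl. apply upper; auto.
  - intros b Hb. assert (HQ : forall n, Rbar_le (Q beta n) b).
    { intros n. apply Hb. exists (sl n). destruct (sl_adm n). repeat split; auto. symmetry. apply sumsq_sl. }
    destruct b as [b| |]; simpl; auto.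
    + destruct (Rle_dec 1 b) as [|Hn]; auto. exfalso.
      destruct (c_small ((1 - b)/5)) as [J HJ]. lra. specialize (HJ J (le_n J)).
      specialize (HQ (7*J+0)%nat). destruct (Pblock beta J 0) as [_ E]; [lia|].
      rewrite E in HQ. simpl in HQ. unfold q in HQ; simpl P in HQ. pose proof (c_pos J). pose proof (c_le J). nra.
    + specialize (HQ 0%nat). simpl in HQ. auto.
Qed.

Lemma extreme beta : extreme_BJ (x beta).
Proof.
  split.
  - unfold BJ, Jnorm. rewrite Jsq. simpl. rewrite sqrt_1. lra.
  - intros y z t Hy Hz Ht Hx. apply functional_extensionality. intros k.
    pose proof (BJ_Q y Hy) as Hy'. pose proof (BJ_Q z Hz) as Hz'. clear Hy Hz. rename Hy' into Hy. rename Hz' into Hz.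
    assert (Hid : forall n, P (fun i => t * (1 - t) * (y i - z i)^2) n =
       t * P (fun i => (y i)^2) n + (1 - t) * P (fun i => (z i)^2) n - Q beta n).
    { induction n. unfold Q; simpl; ring. unfold Q in *. rewrite !P_S, IHn, Hx. ring. }
    destruct (Req_dec (y k) (z k)) as [|Hne]; auto. exfalso.
    assert (Hd : 0 < t * (1 - t) * (y k - z k)^2).
    { apply Rmult_lt_0_compat. apply Rmult_lt_0_compat; lra.
      assert (Hn0 : y k - z k <> 0) by lra. pose proof (Rsqr_pos_lt _ Hn0). unfold Rsqr in *. nra. }
    destruct (c_small (t * (1 - t) * (y k - z k)^2 / 5)) as [J HJ]. lra.
    set (j := Nat.max J (S k)).
    specialize (HJ j ltac:(unfold j; lia)).
    assert (Ht1 : t * (1 - t) * (y k - z k)^2 <= P (fun i => t * (1 - t) * (y i - z i)^2) (7*j+0)%nat).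
    { apply (P_term (fun i => t * (1 - t) * (y i - z i)^2)). intros i.
      apply Rmult_le_pos. apply Rmult_le_pos; lra. apply pow2_ge_0. unfold j; lia. }
    rewrite Hid in Ht1. destruct (Pblock beta j 0) as [_ E]; [lia|]. rewrite E in Ht1.
    assert (Eq0 : q (beta j) 0 = 0) by reflexivity. rewrite Eq0 in Ht1.
    specialize (Hy (7*j+0)%nat). specialize (Hz (7*j+0)%nat).
    pose proof (c_pos j). pose proof (c_le j).
    assert (t * P (fun i => y i ^ 2) (7 * j + 0)%nat <= t) by (apply Rmult_le_compat_l with (r := t) in Hy; lra).
    assert ((1-t) * P (fun i => z i ^ 2) (7 * j + 0)%nat <= 1 - t) by (apply Rmult_le_compat_l with (r := 1 - t) in Hz; lra).
    assert (c j ^ 2 <= 2/9 * c j) by nra.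
    lra.
Qed.

Definition off (b : bool) : nat := if b then 0%nat else 1%nat.
Definition lof (g : bool) (r : nat) : nat :=
  if g then match r with 0%nat => 0%nat | 1%nat => 3%nat | 2%nat => 4%nat | _ => 5%nat end
  else match r with 0%nat => 0%nat | 1%nat => 1%nat | 2%nat => 2%nat | _ => 3%nat end.
Definition hif (g : bool) (r : nat) : nat :=
  if g then match r with 0%nat => 2%nat | 1%nat => 3%nat | 2%nat => 4%nat | _ => 5%nat end
  else match r with 0%nat => 0%nat | 1%nat => 1%nat | 2%nat => 2%nat | _ => 5%nat end.
Definition hval (g : bool) (r : nat) : R :=
  if g then match r with 0%nat => 9 | 1%nat => 4 | 2%nat => 1 | _ => 4 end
  else match r with 0%nat => 4 | 1%nat => 1 | 2%nat => 4 | _ => 9 end.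
Definition hp g r := P (hval g) (S r).

Definition intv (beta gam : nat -> bool) (m r : nat) : interval :=
  mkInterval (7*m + (off (beta m) + lof (gam m) r))%nat (Some (7*m + (off (beta m) + hif (gam m) r))%nat).
Definition fam beta gam (i : nat) : interval := intv beta gam (i/4)%nat (i mod 4)%nat.

Lemma fam_at beta gam m r : (r < 4)%nat -> fam beta gam (4*m + r)%nat = intv beta gam m r.
Proof. intros H. unfold fam. destruct (dm 4 m r) as [-> ->]; auto; lia. Qed.

Lemma tabH b g r : (r < 4)%nat ->
  (off b + lof g r <= off b + hif g r /\ off b + hif g r <= 6)%nat /\
  (s b (off b + hif g r + 1) - s b (off b + lof g r))^2 = hval g r /\
  tab b (off b + lof g r) <> 0 /\ tab b (off b + hif g r) <> 0 /\
  ((r < 3)%nat -> (hif g r < lof g (S r))%nat) /\ (r = 3%nat -> hif g r = 5%nat).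
Proof.
  intros H. destruct b, g;
  (do 4 (destruct r as [|r]; [unfold s; cbn [P tab off hif lof hval Nat.add];
     repeat split; try lia; try ring; try lra |])); lia.
Qed.

Lemma hp_val g r : (r < 4)%nat -> 0 <= hp g r <= 18 /\ (r = 3%nat -> hp g r = 18).
Proof. intros H. destruct g; (do 4 (destruct r as [|r]; [unfold hp; cbn [P hval]; split; [lra | intros Hx; first [lia | lra]]|])); lia. Qed.

Definition aa beta gam (i : nat) : R := (isum (x beta) (fam beta gam i))^2.

Lemma aa_val beta gam m r : (r < 4)%nat -> aa beta gam (4*m + r)%nat = (c m)^2 * hval (gam m) r.
Proof.
  intros H. unfold aa. rewrite fam_at by auto. unfold intv.
  destruct (tabH (beta m) (gam m) r H) as [[L1 L2] [Hh _]].
  rewrite isum_fin by lia.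
  replace (S (7 * m + (off (beta m) + hif (gam m) r)))%nat with (7*m + (off (beta m) + hif (gam m) r + 1))%nat by lia.
  destruct (Pblock beta m (off (beta m) + hif (gam m) r + 1)) as [E1 _]; [lia|].
  destruct (Pblock beta m (off (beta m) + lof (gam m) r)) as [E2 _]; [lia|].
  rewrite E1, E2. rewrite <- Hh. ring.
Qed.

Lemma u_val beta gam m : forall r, (r < 4)%nat ->
  sum_n (aa beta gam) (4*m + r)%nat = 1 - 81/4 * (c m)^2 + (c m)^2 * hp (gam m) r.
Proof.
  induction m.
  - induction r; intros Hr.
    + rewrite sum_O. change (aa beta gam 0) with (aa beta gam (4*0+0)%nat). rewrite aa_val by lia. unfold hp, c; simpl. fixR. field.
    + rewrite Nat.add_succ_r, sum_Sn, IHr by lia. change (plus ?u ?v) with (u + v).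
      rewrite <- Nat.add_succ_r. rewrite aa_val by lia. unfold hp. rewrite (P_S _ (S r)). fixR. ring.
  - induction r; intros Hr.
    + replace (4 * S m + 0)%nat with (S (4*m + 3))%nat by lia.
      rewrite sum_Sn, IHm by lia. change (plus ?u ?v) with (u + v).
      replace (S (4 * m + 3)) with (4 * S m + 0)%nat by lia. rewrite aa_val by lia.
      destruct (hp_val (gam m) 3) as [_ E]; [lia|]. rewrite E by auto.
      unfold hp. simpl P. rewrite c_S. fixR. field.
    + rewrite Nat.add_succ_r, sum_Sn, IHr by lia. change (plus ?u ?v) with (u + v).
      rewrite <- Nat.add_succ_r. rewrite aa_val by lia. unfold hp. rewrite (P_S _ (S r)). fixR. ring.
Qed.

Lemma lim_aa beta gam : Lim_seq (fun n => sum_n (fun i => (isum (x beta) (fam beta gam i))^2) n) = Finite 1.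
Proof.
  apply is_lim_seq_unique. apply is_lim_seq_spec. intros eps.
  destruct (c_small (eps/5)) as [J HJ]. apply Rdiv_lt_0_compat. apply cond_pos. lra.
  exists (4*J)%nat. intros n Hn.
  destruct (decomp 4 n) as [m [r [Hr ->]]]; [lia|].
  change (fun i => (isum (x beta) (fam beta gam i))^2) with (aa beta gam).
  rewrite u_val by auto. destruct (hp_val (gam m) r Hr) as [[h1 h2] _].
  specialize (HJ m ltac:(lia)). pose proof (c_pos m). pose proof (c_le m).
  assert (c m ^2 <= 2/9 * c m) by nra.
  rewrite Rabs_left1 by nra. nra.
Qed.

Lemma partition beta gam : norming_partition (x beta) (InfFam (fam beta gam)).
Proof.
  split; [split; [split; [exact I| split] |] | split; [|exact I]].
  - intros i _. destruct (decomp 4 i) as [m [r [Hr ->]]]; [lia|]. cbn [fam_get]. rewrite fam_at by auto.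
    unfold intv, valid_interval; cbn [lo hi]. destruct (tabH (beta m) (gam m) r Hr). lia.
  - intros i _. destruct (decomp 4 i) as [m [r [Hr ->]]]; [lia|]. cbn [fam_get]. rewrite fam_at by auto.
    unfold intv; cbn [lo hi]. eexists; split; [reflexivity|].
    destruct (tabH (beta m) (gam m) r Hr) as [_ [_ [_ [_ [T1 T2]]]]].
    assert (r < 3 \/ r = 3)%nat as [Hr3|Hr3] by lia.
    + replace (S (4*m + r)) with (4*m + S r)%nat by lia. rewrite fam_at by lia. unfold intv; cbn [lo hi].
      specialize (T1 Hr3). lia.
    + replace (S (4*m + r)) with (4*S m + 0)%nat by lia. rewrite fam_at by lia. unfold intv; cbn [lo hi].
      specialize (T2 Hr3). destruct (beta m), (beta (S m)); simpl; lia.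
  - unfold fam_norm, fam_sq, Jnorm. rewrite Jsq, lim_aa. reflexivity.
  - intros i _. destruct (decomp 4 i) as [m [r [Hr ->]]]; [lia|]. cbn [fam_get]. rewrite fam_at by auto.
    unfold intv; cbn [lo hi]. destruct (tabH (beta m) (gam m) r Hr) as [[L1 L2] [_ [N1 [N2 _]]]].
    pose proof (c_pos m). split.
    + unfold supp. rewrite x_at by lia. apply Rmult_integral_contrapositive. split; lra.
    + eexists; split; [reflexivity|]. unfold supp. rewrite x_at by lia. apply Rmult_integral_contrapositive. split; lra.
Qed.

Lemma cantor {T : Type} (A : T -> Prop) (phi : (nat -> bool) -> T) :
  (forall g, A (phi g)) -> (forall g g', phi g = phi g' -> g = g') -> ~ countable_set A.
Proof.
  intros HA Hinj [G HG].
  set (h := fun g => G (phi g)).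
  assert (Hh : forall g g', h g = h g' -> g = g') by (intros; apply Hinj, HG; auto).
  set (d := fun n => if excluded_middle_informative (exists g, h g = n /\ g n = true) then false else true).
  assert (Hd : forall n, d n = true <-> ~ (exists g, h g = n /\ g n = true)).
  { intros n. unfold d. cbv beta.
    destruct (excluded_middle_informative (exists g, h g = n /\ g n = true)) as [e|e]; split; intros; try tauto; discriminate. }
  destruct (d (h d)) eqn:E.
  - apply (proj1 (Hd (h d)) E). exists d. auto.
  - assert (~ d (h d) = true) by (rewrite E; discriminate).
    rewrite Hd in H. apply NNPP in H. destruct H as [g [e1 e2]].
    assert (g = d) by (apply Hh; auto). subst g. congruence.
Qed.

Theorem proposition6p7 :
  ~ countable_set (fun x : rseq =>
      extreme_BJ x /\ ~ countable_set (norming_partition x)).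
Proof.
  apply (cantor _ x).
  - intros beta. split. apply extreme.
    apply (cantor _ (fun gam => InfFam (fam beta gam))).
    + intros gam. apply partition.
    + intros g1 g2 Heq. injection Heq as Heq. apply functional_extensionality. intros m.
      assert (H := f_equal (fun f => hi (f (4*m+0)%nat)) Heq). cbv beta in H.
      rewrite !fam_at in H by lia. unfold intv in H; simpl in H. injection H as H.
      destruct (g1 m), (g2 m); simpl in H; auto; lia.
  - intros b1 b2 Heq. apply functional_extensionality. intros m.
    assert (H := f_equal (fun f => f (7*m+0)%nat) Heq). cbv beta in H.
    rewrite !x_at in H by lia. pose proof (c_pos m).
    destruct (b1 m), (b2 m); auto; simpl in H; lra.
Qed.
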